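(* For any coprime $r>1$ and $0<a<r$, on the Danilov resolution of $\frac1r(1,a,r-a)$ one has $X_i=D_X+R_i-R_{i+1}$ for all $i=0,\dots,r-1$ (indices mod $r$).
   Context: Notation: for integers $s$ and $t>0$, $\langle s\rangle_t$ is the least non-negative integer congruent to $s$ modulo $t$. A pair of integers $(r,a)$ is admissible if $r\ge1$, $0\le a<r$, $\gcd(r,a)=1$ (so $a=0$ only for $r=1$). For admissible $(r,a)$ put $N(r,a)=\mathbb Z^3+\mathbb Z\cdot\frac1r(1,a,r-a)\subset\mathbb Q^3$; $e_1,e_2,e_3$ is the standard basis, $e_j^*$ the $j$-th coordinate function, and $\Delta(r,a)$ the cone spanned by $e_1,e_2,e_3$. Let $b$ be an inverse of $a$ modulo $r$ and $p_i=\frac1r(\langle -ib\rangle_r,r-i,i)$, $i=0,\dots,r$ (so $p_0=e_2$, $p_r=e_3$, $p_{r-a}=\frac1r(1,a,r-a)$). For $r>1$ let $(r_L,a_L)=(r-a,\langle r\rangle_{r-a})$, $(r_R,a_R)=(a,\langle -r\rangle_a)$; there are lattice isomorphisms $L:N(r_L,a_L)\to N(r,a)$, $R:N(r_R,a_R)\to N(r,a)$ with $L(e_1)=e_1$, $L(e_2)=e_2$, $L(e_3)=p_{r-a}$, $R(e_1)=e_1$, $R(e_2)=p_{r-a}$, $R(e_3)=e_3$. The Danilov fan $\Sigma(r,a)$ is defined recursively: $\Sigma(1,0)$ is $\Delta(1,0)$ with its faces; for $r>1$, $\Sigma(r,a)$ consists of the cone spanned by $e_2,e_3,p_{r-a}$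 with its faces, together with $L(\Sigma(r_L,a_L))$ and $R(\Sigma(r_R,a_R))$. The Danilov resolution $Y$ is the smooth toric variety of $\Sigma(r,a)$, with torus $T$; its rays are spanned by $e_1,p_0,\dots,p_r$; $D_i$ is the $T$-invariant prime divisor of the ray through $p_i$ and $E_j$ that of $e_j$. The permutation $\tau(r,a,\cdot)$ of $\{0,\dots,r-1\}$: if $a\in\{1,r-1\}$, $\tau(r,a,i)=\langle ai-1\rangle_r$; otherwise $\tau(r,a,i)=\tau(r-a,\langle r\rangle_{r-a},\langle i\rangle_{r-a})$ for $i\ge a$ and $\tau(r,a,i)=(r-a)+\tau(a,\langle -r\rangle_a,i)$ for $i<a$. With indices mod $r$, on $Y$ define $Z_i=\sum_{k=\tau(r,a,i)+1}^{r}D_k$ ($i=0,\dots,r-1$) and let $X_0,\dots,X_{r-1}$ be the unique divisors with $X_0=E_1$ and $X_i+Z_{i+1}=Z_i+X_{i-a}$ for all $i$. Define the $\mathbb Q$-divisors $D_X=E_1+\sum_{i=0}^r e_1^*(p_i)D_i$, $D_Z=\sum_{i=0}^r e_3^*(p_i)D_i$, and let $R_0,\dots,R_{r-1}$ be the unique $\mathbb Q$-divisors with $R_0=0$ and $Z_i=D_Z+R_i-R_{i-a}$ for all $i$. *)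

(* Defs.v *)
From mathcomp Require Import all_boot all_order all_algebra.
Set Implicit Arguments. Unset Strict Implicit. Unset Printing Implicit Defensive.
Import Order.TTheory GRing.Theory Num.Theory.
Local Open Scope ring_scope.

Definition negmod (n t : nat) : nat := ((t - n %% t) %% t)%N.

(* The permutation tau(r,a,.), defined by the paper's recursion, with fuel.
   Each recursive call strictly decreases r, so fuel r suffices. *)
Fixpoint tau_fuel (fuel r a i : nat) : nat :=
  match fuel with
  | 0 => 0%N
  | fuel'.+1 =>
    if (a == 1%N) || (a == r.-1) then ((a * i + r - 1) %% r)%N
    else if (a <= i)%N then tau_fuel fuel' (r - a) (r %% (r - a)) (i %% (r - a))
    else ((r - a) + tau_fuel fuel' a (negmod r a) i)%N
  end.

Definition tau (r a i : nat) : nat := tau_fuel r r a i.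

(* T-invariant Q-divisors on the Danilov resolution Y: formal Q-combinations of
   the T-invariant prime divisors, i.e. of the rays e_1, p_0, ..., p_r.
   [None] stands for E_1 and [Some k] for D_k. *)
Definition qdiv (r : nat) := {ffun option 'I_r.+1 -> rat}.

Definition E1 (r : nat) : qdiv r :=
  finfun (fun x : option 'I_r.+1 => (if x is None then 1 else 0) : rat).

Definition Zdiv (r a i : nat) : qdiv r :=
  finfun (fun x : option 'I_r.+1 =>
    (if x is Some k then (if (tau r a i < k)%N then 1 else 0) else 0) : rat).

(* p_i = (1/r)(<-i b>_r, r - i, i); e_1^*(p_i) = <-ib>_r / r, e_3^*(p_i) = i/r. *)
Definition e1p (r b k : nat) : rat := (negmod (k * b) r)%:R / r%:R.
Definition e3p (r k : nat) : rat := k%:R / r%:R.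

Definition DXdiv (r b : nat) : qdiv r :=
  finfun (fun x : option 'I_r.+1 => (if x is Some k then e1p r b k else 1) : rat).

Definition DZdiv (r : nat) : qdiv r :=
  finfun (fun x : option 'I_r.+1 => (if x is Some k then e3p r k else 0) : rat).

(* Main.v *)
Require Import Defs.
From mathcomp Require Import all_boot all_order all_algebra.
Import GRing.Theory.
From mathcomp Require Import zify lra.

Lemma carry_split (r a m : nat) : 0 < r -> a < r ->
  (r <= m*a %% r + a -> (m.+1*a) %/ r = (m*a %/ r).+1 /\ (m.+1*a) %% r = m*a %% r + a - r) /\
  (m*a %% r + a < r -> (m.+1*a) %/ r = m*a %/ r /\ (m.+1*a) %% r = m*a %% r + a).
Proof.
move=> r0 ar.
have E := divn_eq (m*a) r.
have sr : m*a %% r < r by rewrite ltn_mod.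
set c := m*a %/ r in E *; set s := m*a %% r in E sr *.
split=> H.
- have E2 : m.+1*a = c.+1 * r + (s + a - r) by rewrite mulSn E; lia.
  rewrite E2 divnMDl // modnMDl divn_small ?modn_small; lia.
- have E2 : m.+1*a = c * r + (s + a) by rewrite mulSn E; lia.
  rewrite E2 divnMDl // modnMDl divn_small ?modn_small; lia.
Qed.

Lemma tauS f r a i : tau_fuel f.+1 r a i =
  if (a == 1) || (a == r.-1) then ((a * i + r - 1) %% r)
  else if a <= i then tau_fuel f (r - a) (r %% (r - a)) (i %% (r - a))
  else (r - a) + tau_fuel f a (negmod r a) i.
Proof. by []. Qed.

Fixpoint cnt (g : nat -> nat) (m k : nat) : nat :=
  if m is m'.+1 then cnt g m' k + (g m < k) else 0.

Lemma cnt0 g m : cnt g m 0 = 0.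
Proof. by elim: m => //= m ->. Qed.

Lemma cnt_le g m k : cnt g m k <= m.
Proof. elim: m => //= m IH; case: (g m.+1 < k) => /=; lia. Qed.

Lemma cnt_mono g m k1 k2 : k1 <= k2 -> cnt g m k1 <= cnt g m k2.
Proof.
move=> h; elim: m => //= m IH.
case: (ltnP (g m.+1) k1) => h1.
- have -> : g m.+1 < k2 by apply: leq_trans h1 h. lia.
- case: (g m.+1 < k2) => /=; lia.
Qed.

Lemma cnt_ext g1 g2 m k : (forall j, 0 < j <= m -> g1 j = g2 j) -> cnt g1 m k = cnt g2 m k.
Proof.
elim: m => //= m IH H; rewrite IH ?H //; last by move=> j hj; apply: H; lia.
by rewrite ltnSn.
Qed.

Lemma mod_uniq d x y z : x < d -> (x + y) %% d = 0 -> (z + y) %% d = 0 -> x = z %% d.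
Proof.
move=> xd h1 h2.
have : (x + y + z) %% d = (z + y + x) %% d by congr (_ %% d); lia.
rewrite -modnDml h1 -[in RHS]modnDml h2 /= !add0n (modn_small xd).
by move=> ->.
Qed.

Lemma negmod_prop r a : 0 < a -> (negmod r a + r) %% a = 0.
Proof.
move=> a0; rewrite /negmod modnDml.
have E := divn_eq r a; have ra : r %% a < a by rewrite ltn_mod.
have -> : a - r %% a + r = (r %/ a).+1 * a by rewrite {2}E; lia.
by rewrite modnMl.
Qed.

Lemma carry_val r a m : 0 < a -> (m * a) %% r < a ->
  (m * a) %% r = (((m * a) %/ r) * negmod r a) %% a.
Proof.
move=> a0 h; apply: (mod_uniq _ _ ((m*a %/ r) * r)) => //.
- by rewrite addnC -divn_eq modnMl.
- by rewrite -mulnDr -modnMmr negmod_prop // muln0 mod0n.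
Qed.

Lemma div_le_m r a m : a < r -> (m * a) %/ r <= m.
Proof.
move=> ar; apply: (@leq_trans ((m * r) %/ r)); first by apply: leq_div2r; rewrite leq_mul2l (ltnW ar) orbT.
by rewrite mulnK //; lia.
Qed.

Lemma noncarry_val r a m : a < r ->
  (m * a) %% r %% (r - a) = ((m - (m * a) %/ r) * (r %% (r - a))) %% (r - a).
Proof.
move=> ar.
have cm := div_le_m _ _ m ar.
set c := m * a %/ r in cm *.
rewrite modnMmr.
have Er : r = a + (r - a) by lia.
apply/eqP.
rewrite -(eqn_modDr (c * a)).
have E := divn_eq (m * a) r.
set s0 := m * a %% r in E *.
have H1 : c * (r - a) + (s0 + c * a) = m * a.
  rewrite {1}E; rewrite {3}Er; nia.
have H2 : (m - c) * r + c * a = (m - c) * (r - a) + m * a.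
  rewrite {1}Er; nia.
rewrite H2 -H1.
by rewrite !modnMDl.
Qed.

Section Decomp.
Variables (f r a : nat).
Hypotheses (a0 : 0 < a) (ar : a < r) (a1 : a != 1) (ar1 : a != r.-1).

Let gr j := tau_fuel f.+1 r a (j * a %% r).
Let gL j := tau_fuel f (r - a) (r %% (r - a)) (j * (r %% (r - a)) %% (r - a)).
Let gR j := tau_fuel f a (negmod r a) (j * negmod r a %% a).

Lemma decomp m k : cnt gr m k = cnt gL (m - m * a %/ r) k + cnt gR (m * a %/ r) (k - (r - a)).
Proof.
have r0 : 0 < r by lia.
elim: m => [|m IH] /=; first by rewrite mul0n div0n.
rewrite IH.
have [C1 C2] := carry_split _ _ m r0 ar.
have cm := div_le_m _ _ m ar.
have sr : m * a %% r < r by rewrite ltn_mod.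
case: (leqP r (m * a %% r + a)) => H.
- have [D1 D2] := C1 H.
  rewrite D1 subSS /= -addnA; congr (_ + _).
  have hi : m.+1 * a %% r < a by rewrite D2; lia.
  rewrite /gr tauS (negbTE a1) (negbTE ar1) orbF (leqNgt a) hi /=.
  rewrite /gR -D1 -carry_val //.
  by rewrite ltn_subRL.
- have [D1 D2] := C2 H.
  rewrite D1 subSn // /= -!addnA; congr (_ + _); rewrite addnC; congr (_ + _).
  have hi : a <= m.+1 * a %% r by rewrite D2; lia.
  rewrite /gr tauS (negbTE a1) (negbTE ar1) /= hi /=.
  rewrite /gL -subSn // -D1 -noncarry_val //.
Qed.
End Decomp.

Lemma arith_L r a b q k n : 1 < r - a -> a < r -> (b - q) * r = b * (r - a) + 1 -> k <= r - a ->
  (b - q) * k <= n * (r - a) -> n * (r - a) < (b - q) * k + (r - a) ->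
  b * k <= n * r /\ n * r < b * k + r.
Proof.
move=> h1 h2 F hk L U.
set rL := r - a in h1 F hk L U *.
set bL := b - q in F L U *.
have L' : bL * k * r <= n * rL * r by rewrite leq_mul2r L orbT.
have U' : n * rL * r + r <= (bL * k + rL) * r by rewrite -mulSnr leq_mul2r U orbT.
split; nia.
Qed.

Lemma arith_R r a b q k n : 1 < r - a -> 0 < a -> a < r -> q <= b ->
  (b - q) * r = b * (r - a) + 1 -> a * b = q * r + 1 -> r - a <= k -> k <= r ->
  q * (k - (r - a)) <= n * a -> n * a < q * (k - (r - a)) + a ->
  b * k <= (b - q + n) * r /\ (b - q + n) * r < b * k + r.
Proof.
move=> h1 a0 h2 qb F E hk1 hk L U.
have Er : r = (r - a) + a by lia.
have Ek : k = (r - a) + (k - (r - a)) by lia.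
have Eb : b = (b - q) + q by lia.
set rL := r - a in h1 F hk1 Er Ek L U *.
set bL := b - q in F Eb *.
set k' := k - rL in Ek L U *.
have L' : q * k' * r <= n * a * r by rewrite leq_mul2r L orbT.
have U' : n * a * r + r <= (q * k' + a) * r by rewrite -mulSnr leq_mul2r U orbT.
have hk' : k' <= a by lia.
rewrite Ek; split; nia.
Qed.

Lemma cnt_pred m k : cnt (fun j => j.-1) m k = minn m k.
Proof.
elim: m => [|m IH] /=; first by rewrite min0n.
rewrite IH; case: ltnP => h /=; lia.
Qed.

Lemma aux u w : (u.+1 + w).-1 * w + (u.+1 + w) - 1 = w * (u.+1 + w) + (u.+1).-1.
Proof. rewrite addSn /= subn1 /=. nia. Qed.

Lemma base_r1 f r b k : 1 < r -> (r.-1 * b) %% r = 1 -> b < r -> k <= r ->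
  let n := cnt (fun j => tau_fuel f.+1 r r.-1 (j * r.-1 %% r)) b k in
  b * k <= n * r /\ n * r < b * k + r.
Proof.
move=> r1 hb br hk /=.
have Eb : b = r.-1.
  have E := divn_eq (r.-1 * b) r; rewrite hb in E.
  set t := r.-1 * b %/ r in E.
  have E2 : r * b = t * r + 1 + b by rewrite -addn1 -E -{1}(prednK (ltnW r1)) mulSn; lia.
  have [h|[h|h]] : b <= t \/ b = t.+1 \/ t.+2 <= b by lia.
  - have : r * b <= t * r by rewrite mulnC leq_mul2r h orbT.
    lia.
  - rewrite h in E2 *; nia.
  - have : t.+2 * r <= b * r by rewrite leq_mul2r h orbT.
    nia.
rewrite (@cnt_ext _ (fun j => j.-1)); last first.
  move=> j hj; change (tau_fuel f.+1 r r.-1 (j * r.-1 %% r) = j.-1); rewrite tauS eqxx orbT.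
  have E1 : j * r.-1 = j.-1 * r + (r - j) by case: r r1 br {hb hk Eb} => // r _; move=> br; case: j hj => // j hj /=; nia.
  rewrite E1 modnMDl (@modn_small (r - j)); last by lia.
  have E2 : r.-1 * (r - j) + r - 1 = (r - j) * r + j.-1.
    have Hr' : j.-1.+1 + (r - j) = r by lia.
    have Hj' : j.-1.+1 = j by lia.
    by have := aux j.-1 (r - j); rewrite Hr' Hj'.
  by rewrite E2 modnMDl modn_small //; lia.
rewrite cnt_pred Eb /minn.
case: ltnP => h; nia.
Qed.

Lemma base_a1 f r b k : 1 < r -> (1 * b) %% r = 1 -> b < r -> k <= r ->
  let n := cnt (fun j => tau_fuel f.+1 r 1 (j * 1 %% r)) b k in
  b * k <= n * r /\ n * r < b * k + r.
Proof.
move=> r1 hb br hk /=.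
rewrite mul1n modn_small // in hb; subst b.
rewrite /= !mul1n (modn_small r1).
have -> : 1 + r - 1 = r by lia.
rewrite modnn; case: k hk => [|k] hk /=; lia.
Qed.

Theorem core f : forall r a b k, r <= f -> 1 < r -> 0 < a -> a < r -> (a * b) %% r = 1 -> b < r -> k <= r ->
  let n := cnt (fun j => tau_fuel f r a (j * a %% r)) b k in b * k <= n * r /\ n * r < b * k + r.
Proof.
elim: f => [|f IH] r a b k hf r1 a0 ar hb br hk; first lia.
case: (boolP ((a == 1) || (a == r.-1))) => hbase.
  case/orP: hbase => /eqP Ea; subst a.
  - exact: base_a1.
  - exact: base_r1.
rewrite negb_or in hbase; case/andP: hbase => a1 ar1.
cbv zeta; rewrite (decomp f r a a0 ar a1 ar1).
set rL := r - a.
set aL := r %% rL.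
set aR := negmod r a.
set q := b * a %/ r.
have E : a * b = q * r + 1 by rewrite [LHS](divn_eq _ r) hb /q (mulnC b a).
have rL1 : 1 < rL by rewrite /rL; move: ar1; lia.
have a2 : 1 < a by move: a1; lia.
have q0 : 0 < q by rewrite lt0n; apply/eqP => q0; move: E; rewrite q0 mul0n add0n => /eqP; rewrite muln_eq1 => /andP [/eqP ha _]; move: a1; rewrite ha.
have abr : a * b <= a * r by rewrite leq_mul2l (ltnW br) orbT.
have qa : q < a.
  have h : q * r < a * r by lia.
  by rewrite ltn_pmul2r in h; lia.
have abr2 : a * b <= r * b by rewrite leq_mul2r (ltnW ar) orbT.
have qb : q < b.
  have h : q * r < b * r by rewrite (mulnC b r); lia.
  by rewrite ltn_pmul2r in h; lia.
have F : (b - q) * r = b * rL + 1.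
  rewrite /rL mulnBl mulnBr (mulnC b a).
  have : q * r <= b * r by rewrite leq_mul2r (ltnW qb) orbT.
  have : a * b <= b * r by rewrite mulnC leq_mul2l (ltnW ar) orbT.
  lia.
have bL : aL * (b - q) %% rL = 1.
  by rewrite mulnC /aL modnMmr F modnMDl modn_small.
have bLr : b - q < rL.
  have h : b.+1 * rL <= r * rL by rewrite leq_mul2r br orbT.
  rewrite mulSn in h.
  have h2 : (b - q) * r < rL * r by rewrite F (mulnC rL r); lia.
  by rewrite ltn_pmul2r in h2; lia.
have aLr : aL < rL by rewrite ltn_mod; lia.
have aL0 : 0 < aL by move: bL; case: (aL) => //; rewrite mul0n mod0n.
have aRa : aR < a by rewrite /aR /negmod ltn_mod.
have bR : aR * q %% a = 1.
  have N := negmod_prop r a a0; rewrite -/aR in N.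
  have E2 := divn_eq (aR + r) a; rewrite N addn0 in E2.
  set t := (aR + r) %/ a in E2.
  have E4 : q * (aR + r) = q * (t * a) by rewrite -E2.
  rewrite mulnDr mulnA in E4.
  have E3 : q * aR + b * a = q * t * a + 1 by rewrite (mulnC b a); lia.
  have H : (q * aR + b * a) %% a = (q * aR) %% a by rewrite addnC modnMDl.
  by rewrite mulnC -H E3 modnMDl modn_small.
have aR0 : 0 < aR by move: bR; case: (aR) => //; rewrite mul0n mod0n.
have fL : rL <= f by lia.
have fR : a <= f by lia.
case: (leqP k rL) => hkL.
- have -> : k - rL = 0 by lia.
  rewrite cnt0 addn0.
  have [L U] := IH rL aL (b - q) k fL rL1 aL0 aLr bL bLr hkL.
  exact: (arith_L _ _ _ _ _ _ rL1 ar F hkL L U).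
- have hk' : k - rL <= a by lia.
  have [L U] := IH a aR q (k - rL) fR a2 aR0 aRa bR qa hk'.
  have [L2 U2] := IH rL aL (b - q) rL fL rL1 aL0 aLr bL bLr (leqnn _).
  have -> : cnt (fun j => tau_fuel f rL aL (j * aL %% rL)) (b - q) k = b - q.
    apply/eqP; rewrite eqn_leq cnt_le /=.
    apply: (leq_trans _ (cnt_mono _ _ _ _ (ltnW hkL))).
    rewrite -(leq_pmul2r (ltnW rL1)); exact: L2.
  exact: (arith_R _ _ _ _ _ _ rL1 a0 ar (ltnW qb) F E (ltnW hkL) hk L U).
Qed.

Lemma ceil_negmod m n r : 0 < r -> m <= n * r -> n * r < m + r -> n * r = m + negmod m r.
Proof.
move=> r0 L U.
have E := divn_eq m r; have sr : m %% r < r by rewrite ltn_mod.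
set q := m %/ r in E *; set s := m %% r in E sr *.
rewrite /negmod -/s.
have h1 : q * r <= n * r by lia.
have h2 : n * r < q.+2 * r by rewrite !mulSn; lia.
rewrite leq_pmul2r // in h1; rewrite ltn_pmul2r // in h2.
have [En|En] : n = q \/ n = q.+1 by lia.
all: rewrite En in L U *.
- have s0 : s = 0 by lia.
  by rewrite s0 subn0 modnn; lia.
- have s0 : 0 < s by rewrite mulSn in U; lia.
  rewrite modn_small; last by lia.
  rewrite mulSn; lia.
Qed.

Lemma idx_gen r a X c : a <= r -> (X %% r + c + r - a) %% r = (X + c + r - a) %% r.
Proof.
move=> ar.
rewrite -!addnBA // -!addnA.
by rewrite modnDml.
Qed.

Lemma idx_step r a j c : a <= r -> ((j.+1 * a) + c + r - a) %% r = (j * a + c) %% r.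
Proof.
move=> ar.
have -> : j.+1 * a + c + r - a = j * a + c + r by rewrite mulSn; lia.
by rewrite modnDr.
Qed.

Local Open Scope ring_scope.

Theorem mainTheorem7 (r a b : nat)
  (hr : (1 < r)%N) (ha0 : (0 < a)%N) (har : (a < r)%N) (hcop : coprime r a)
  (hb : ((a * b) %% r = 1)%N)
  (X R : nat -> qdiv r)
  (hX0 : X 0%N = E1 r)
  (hX : forall i, (i < r)%N ->
     X i + Zdiv r a ((i + 1) %% r)%N = Zdiv r a i + X ((i + r - a) %% r)%N)
  (hR0 : R 0%N = 0)
  (hR : forall i, (i < r)%N ->
     Zdiv r a i = DZdiv r + R i - R ((i + r - a) %% r)%N) :
  forall i, (i < r)%N -> X i = DXdiv r b + R i - R ((i + 1) %% r)%N.
Proof.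
have r0 : (0 < r)%N by lia.
have arl : (a <= r)%N by lia.
have rn0 : (r%:R : rat) != 0 by rewrite Num.Theory.pnatr_eq0; lia.
pose g := fun j => tau r a (j * a %% r)%N.
have idx1 : forall j, (((j.+1 * a) %% r + r - a) %% r = (j * a) %% r)%N.
  move=> j; have := idx_gen r a (j.+1 * a) 0 arl; rewrite !addn0 => ->.
  by have := idx_step r a j 0 arl; rewrite !addn0.
have idx2 : forall j, ((((j.+1 * a) %% r + 1) %% r + r - a) %% r = ((j * a) %% r + 1) %% r)%N.
  move=> j; have := idx_gen r a ((j.+1 * a) %% r + 1) 0 arl; rewrite !addn0 => ->.
  rewrite idx_gen // idx_step //.
  by rewrite modnDml.
have HR : forall j x, R ((j * a) %% r)%N x =
    (if x is Some k then (cnt g j k)%:R - (j * k)%:R / r%:R else 0).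
  elim=> [|j IH] x.
    rewrite mul0n mod0n hR0 ffunE; case: x => // k /=.
    by rewrite mul0n mul0r subrr.
  have ir : ((j.+1 * a) %% r < r)%N by rewrite ltn_mod.
  have := congr1 (fun F : qdiv r => F x) (hR _ ir).
  rewrite idx1 !ffunE IH => h.
  case: x h => [k|] /= h; last by lra.
  move: h; rewrite /e3p /g /= => h.
  rewrite (mulSn j k) !natrD mulrDl.
  move: h; case: (tau r a ((j.+1 * a) %% r) < k)%N => /= h; lra.
set b0 := (b %% r)%N.
have hb0 : ((a * b0) %% r = 1)%N by rewrite /b0 modnMmr.
have b0r : (b0 < r)%N by rewrite /b0 ltn_mod.
have Hb0a : ((b0 * a) %% r = 1)%N by rewrite mulnC.
have HX0 : X 0%N = DXdiv r b + R 0%N - R 1%N.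
  apply/ffunP => x; rewrite hX0 hR0 !ffunE.
  have := HR b0 x; rewrite Hb0a => ->.
  case: x => [k|] /=; last by lra.
  have hk : (k <= r)%N by have := ltn_ord k; lia.
  have [L U] := core r r a b0 k (leqnn r) hr ha0 har hb0 b0r hk.
  have := ceil_negmod (b0 * k) _ r r0 L U.
  set n := cnt _ b0 k => Hn.
  have Hn' : (cnt g b0 k)%:R = ((b0 * k)%:R + (negmod (b0 * k) r)%:R) / (r%:R : rat).
    by rewrite -natrD -Hn natrM mulfK.
  rewrite Hn' /e1p.
  have -> : negmod (k * b) r = negmod (b0 * k) r.
    by rewrite /negmod /b0 modnMml mulnC.
  rewrite mulrDl; lra.
have HXj : forall j, X ((j * a) %% r)%N = DXdiv r b + R ((j * a) %% r)%N - R (((j * a) %% r + 1) %% r)%N.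
  elim=> [|j IH]; first by rewrite mul0n mod0n HX0 modn_small.
  have ir : ((j.+1 * a) %% r < r)%N by rewrite ltn_mod.
  have ir1 : (((j.+1 * a) %% r + 1) %% r < r)%N by rewrite ltn_mod.
  apply/ffunP => x.
  have h1 := congr1 (fun F : qdiv r => F x) (hX _ ir).
  have h2 := congr1 (fun F : qdiv r => F x) (hR _ ir).
  have h3 := congr1 (fun F : qdiv r => F x) (hR _ ir1).
  have h4 := congr1 (fun F : qdiv r => F x) IH.
  rewrite idx1 in h1 h2.
  rewrite idx2 in h3.
  rewrite /= !ffunE in h1 h2 h3 h4 *.
  lra.
move=> i ir.
have := HXj (i * b0)%N.
by rewrite -mulnA -modnMmr Hb0a muln1 modn_small.
Qed.
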